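(* If $n > k \geq s \geq 0$ are integers, then there exists no $(n,k,s,s)$-oriented graph.
   Context: An oriented graph is a digraph with no loops and no pair of symmetric arcs. For vertices $u,v$ write $u(1\text{-}0)v$ if there is an arc from $u$ to $v$, and $u(0\text{-}0)v$ if there is no arc between $u$ and $v$. A vertex $v$ is weakly reachable within two steps from $u$ if $u(1\text{-}0)v$, or $u(0\text{-}0)v$, or for some vertex $w$ one has $u(1\text{-}0)w(1\text{-}0)v$, or $u(1\text{-}0)w(0\text{-}0)v$, or $u(0\text{-}0)w(1\text{-}0)v$. A vertex $u$ is a weak king if every other vertex is weakly reachable within two steps from $u$, and a weak serf if $u$ is weakly reachable within two steps from every other vertex. An $(n,k,s,b)$-oriented graph is an oriented graph on $n$ vertices with exactly $k$ weak kings and exactly $s$ weak serfs, such that exactly $b$ of the weak kings are also weak serfs. *)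

(* Defs.v *)
From mathcomp Require Import all_boot.
Set Implicit Arguments. Unset Strict Implicit. Unset Printing Implicit Defensive.

Section OrientedGraphs.
Variable T : finType.
Variable arc : rel T.

Definition oriented : Prop :=
  (forall u, ~~ arc u u) /\ (forall u v, arc u v -> ~~ arc v u).

Definition a10 (u v : T) : bool := arc u v.
Definition a00 (u v : T) : bool := ~~ arc u v && ~~ arc v u.

Definition weakly_reach2 (u v : T) : bool :=
  [|| a10 u v, a00 u v |
      [exists w, [|| a10 u w && a10 w v, a10 u w && a00 w v |
                     a00 u w && a10 w v]]].

Definition weak_king (u : T) : bool :=
  [forall v, (v != u) ==> weakly_reach2 u v].

Definition weak_serf (u : T) : bool :=
  [forall v, (v != u) ==> weakly_reach2 v u].

Definition weak_kings : {set T} := [set u | weak_king u].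
Definition weak_serfs : {set T} := [set u | weak_serf u].

Definition is_nksb_graph (n k s b : nat) : Prop :=
  oriented /\ #|T| = n /\ #|weak_kings| = k /\ #|weak_serfs| = s /\
  #|weak_kings :&: weak_serfs| = b.
End OrientedGraphs.

(* Main.v *)
Require Import Defs.
From mathcomp Require Import all_boot.
From mathcomp Require Import zify.
Set Implicit Arguments. Unset Strict Implicit. Unset Printing Implicit Defensive.

Section Aux.
Variable T : finType.
Variable arc : rel T.
Hypothesis irr : forall u, ~~ arc u u.
Hypothesis asym : forall u v, arc u v -> ~~ arc v u.

Definition dom x v := [&& arc v x, [forall w, arc x w ==> arc v w] &
   [forall w, arc w v ==> arc w x]].

Lemma asymb u v : arc u v && arc v u = false.
Proof. by case H: (arc u v) => //=; apply/negbTE/asym. Qed.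

Lemma domA x : ~~ weak_king arc x -> exists v, dom x v.
Proof.
move=> /forallPn [v]; rewrite negb_imply => /andP [nvx nr].
exists v; move: nr; rewrite /weakly_reach2 /a10 /a00 !negb_or.
case/and3P=> h1 h2 /existsPn h3.
apply/and3P; split.
- by move: h1 h2; case: (arc v x); case: (arc x v).
- apply/forallP => w; move: (h3 w) (asymb w v).
  by case: (arc x w); case: (arc w v); case: (arc v w).
- apply/forallP => w; move: (h3 w) (asymb w v) (asymb x w).
  by case: (arc x w); case: (arc w v); case: (arc v w); case: (arc w x).
Qed.

Lemma domB x v : dom x v -> ~~ weak_king arc x.
Proof.
case/and3P=> h1 /forallP h2 /forallP h3; apply/forallPn; exists v.
rewrite negb_imply; apply/andP; split.
  by apply/eqP=> E; move: h1; rewrite E (negbTE (irr x)).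
rewrite /weakly_reach2 /a10 /a00 !negb_or.
apply/and3P; split.
- by move: (asymb x v); rewrite h1; case: (arc x v).
- by rewrite h1 andbF.
- apply/existsPn => w; move: (h2 w) (h3 w) (asymb w v) (asymb x w).
  by case: (arc x w); case: (arc w v); case: (arc v w); case: (arc w x).
Qed.

Lemma domC u : ~~ weak_serf arc u -> exists y, dom y u.
Proof.
move=> /forallPn [v]; rewrite negb_imply => /andP [nvu nr].
exists v; move: nr; rewrite /weakly_reach2 /a10 /a00 !negb_or.
case/and3P=> h1 h2 /existsPn h3.
apply/and3P; split.
- by move: h1 h2; case: (arc v u); case: (arc u v).
- apply/forallP => w; move: (h3 w) (asymb w u) (asymb v w).
  by case: (arc v w); case: (arc w u); case: (arc u w); case: (arc w v).
- apply/forallP => w; move: (h3 w) (asymb w u) (asymb v w).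
  by case: (arc v w); case: (arc w u); case: (arc u w); case: (arc w v).
Qed.

Lemma domD x v y : dom x v -> dom v y -> dom x y.
Proof.
case/and3P=> a1 /forallP a2 /forallP a3; case/and3P=> b1 /forallP b2 /forallP b3.
apply/and3P; split.
- by apply: (implyP (b2 x)).
- by apply/forallP => w; apply/implyP => h; apply: (implyP (b2 w)); apply: (implyP (a2 w)).
- by apply/forallP => w; apply/implyP => h; apply: (implyP (a3 w)); apply: (implyP (b3 w)).
Qed.

Lemma dom_card y u : dom y u -> #|[set w | arc y w]| < #|[set w | arc u w]|.
Proof.
case/and3P=> a1 /forallP a2 _; apply: proper_card; apply/properP; split.
  by apply/subsetP => w; rewrite !inE => h; apply: (implyP (a2 w)).
by exists y; rewrite !inE ?a1 ?irr.
Qed.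

Lemma key_aux n x v : #|[set w | arc x w]| <= n -> dom x v ->
  exists m, weak_serf arc m && ~~ weak_king arc m.
Proof.
elim: n x => [|n IH] x Hx Hd.
  case Sx: (weak_serf arc x); first by exists x; rewrite Sx (domB Hd).
  case: (domC (negbT Sx)) => y Hy; move: (dom_card Hy); lia.
case Sx: (weak_serf arc x); first by exists x; rewrite Sx (domB Hd).
case: (domC (negbT Sx)) => y Hy.
apply: (IH y _ (domD Hy Hd)).
move: (dom_card Hy); lia.
Qed.

Lemma key x v : dom x v -> exists m, weak_serf arc m && ~~ weak_king arc m.
Proof. exact: (@key_aux _ x v (leqnn _)). Qed.
End Aux.

Theorem theorem8 (n k s : nat) (hnk : k < n) (hks : s <= k) :
  forall (T : finType) (arc : rel T), ~ is_nksb_graph arc n k s s.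
Proof.
move=> T arc [[irr asym] [hT [hK [hS hB]]]].
have sub : weak_serfs arc \subset weak_kings arc.
  have: weak_kings arc :&: weak_serfs arc = weak_serfs arc.
    by apply/eqP; rewrite eqEcard subsetIr hB hS leqnn.
  by move/setIidPr.
have [x Kx] : exists x, ~~ weak_king arc x.
  apply/existsP; rewrite -negb_forall; apply/negP => /forallP H.
  have : weak_kings arc = setT by apply/setP => z; rewrite !inE H.
  by move=> E; move: hK; rewrite E cardsT hT => E'; move: hnk; rewrite E' ltnn.
case: (domA asym Kx) => v Hv.
case: (key irr asym Hv) => m /andP [Sm Km].
by move/subsetP: sub => /(_ m); rewrite !inE Sm (negbTE Km) => /(_ isT).
Qed.
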